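(* In the Simpler Lazy Set algorithm, for every step $(S,e,T)$ (with $S$ normal) and every address $a$: if $a$ is removed at $S$, then $a$ is removed at $T$.
   Context: Simpler Lazy Set algorithm. Fix a countably infinite set $A$ of addresses with distinguished $\mathsf H,\mathsf T$; $\mathrm{Number}=\mathbb N\cup\{-1,\infty\}$. A state $S$: finite set $\mathrm{Active}^S\subseteq A$, $\mathrm{Next}^S:\mathrm{Active}^S\setminus\{\mathsf T\}\to A$, $\mathrm{Val}^S:\mathrm{Active}^S\to\mathrm{Number}$, and for each process $p$: $PC_p\in\{0,1,2,3.1,3.2,3.3,3.4,3.5\}$, $x_p\in\mathbb N$, $\mathrm{curr}_p\in A$, $\mathrm{status}_p\in\{0,1,f\}$. $S$ is normal if $\mathsf H,\mathsf T$ are active with values $-1,\infty$, other active addresses have values in $\mathbb N$, and for active $a\neq\mathsf T$, $\mathrm{Next}(a)$ is active with $\mathrm{Val}(a)<\mathrm{Val}(\mathrm{Next}(a))$. A path is a sequence $a_1,\dots,a_m$ ($m>1$) of active addresses with $\mathrm{Next}(a_i)=a_{i+1}$; the main branch is the path from $\mathsf H$ to $\mathsf T$. An address is removed at $S$ if it is active in $S$ but not on the main branch of $S$. Steps $(S,e,T)$ of process $p$ on a normal state $S$ (each with a status $\chi(e)$, and some with an address $\mathrm{adr}(e)$): (i) invocation: $PC_p^S=0$, $PC_p^T\in\{1,2,3.1\}$, $x_p^T\in\mathbb N$ arbitrary, nothing else changes; (ii) failure: $PC_p^S\in\{1,2\}$, $PC_p^T=0$, $\chi(e)=f$, nothing else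 changes; (iii) $\mathrm{AD}(x)$ with $x=x_p$, $PC_p^S=1$, $PC_p^T=0$: let $\mathfrak p$ be the address on the main branch with $\mathrm{Val}(\mathfrak p)<x\le\mathrm{Val}(\mathrm{Next}(\mathfrak p))$; if $\mathrm{Val}(\mathrm{Next}(\mathfrak p))=x$, nothing else changes, $\chi(e)=1$, $\mathrm{adr}(e)=\mathrm{Next}^S(\mathfrak p)$; otherwise choose $a\notin\mathrm{Active}^S$, set $\mathrm{Active}^T=\mathrm{Active}^S\cup\{a\}$, $\mathrm{Val}^T(a)=x$, $\mathrm{Next}^T(\mathfrak p)=a$, $\mathrm{Next}^T(a)=\mathrm{Next}^S(\mathfrak p)$, $\chi(e)=0$, $\mathrm{adr}(e)=a$ ($e$ activates $a$); (iv) $\mathrm{RM}(x)$ with $x=x_p$, $PC_p^S=2$, $PC_p^T=0$: if the main branch contains $cu$ with value $x$ and $pred$ is the main-branch address with $\mathrm{Next}^S(pred)=cu$, then $\mathrm{Next}^T(pred)=\mathrm{Next}^S(cu)$, $\chi(e)=1$, $\mathrm{adr}(e)=cu$; otherwise nothing else changes and $\chi(e)=0$; (v) CONTAINS$(x)$ lines with $x=x_p$, each an atomic step changing only $\mathrm{curr}_p,PC_p,\mathrm{status}_p$: 3.1: $\mathrm{curr}:=\mathsf H$; 3.2/3.3: $\mathrm{curr}:=\mathrm{Next}(\mathrm{curr})$ (read in the current state); 3.4: if $\mathrm{Val}(\mathrm{curr})\ge x$ go to 3.5, else back to 3.3; 3.5: return status $1$ if $\mathrm{Val}(\mathrm{curr})=x$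 and $0$ otherwise, $PC_p:=0$. *)

(* Defs.v *)
From Stdlib Require Import List.
Import ListNotations.
Set Implicit Arguments.

Inductive Number : Type := NegOne | Fin (n : nat) | Inf.

Definition num_lt (u v : Number) : Prop :=
  match u, v with
  | NegOne, NegOne => False
  | NegOne, _ => True
  | Fin m, Fin n => m < n
  | Fin _, Inf => True
  | _, _ => False
  end.

Definition num_le (u v : Number) : Prop := num_lt u v \/ u = v.

Inductive PCval : Type := PC0 | PC1 | PC2 | PC3_1 | PC3_2 | PC3_3 | PC3_4 | PC3_5.

Inductive Status : Type := St0 | St1 | Stf.

(* A state over address type A and process type P.  The partial maps
   Next (on Active \ {T}) and Val (on Active) are represented by total
   functions whose values outside their domain are irrelevant. *)
Record State (A P : Type) : Type := mkState {
  Active : A -> Prop;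
  Next : A -> A;
  Val : A -> Number;
  PC : P -> PCval;
  xv : P -> nat;
  curr : P -> A;
  status : P -> Status
}.

Definition finite_active (A P : Type) (S : State A P) : Prop :=
  exists l : list A, forall a, Active S a -> In a l.

Definition normal (A P : Type) (aH aT : A) (S : State A P) : Prop :=
  finite_active S /\
  Active S aH /\ Active S aT /\ Val S aH = NegOne /\ Val S aT = Inf /\
  (forall a, Active S a -> a <> aH -> a <> aT -> exists n, Val S a = Fin n) /\
  (forall a, Active S a -> a <> aT ->
     Active S (Next S a) /\ num_lt (Val S a) (Val S (Next S a))).

(* is_path S (a1 :: ... :: am): all ai active, m > 1, Next(ai) = a(i+1)
   (Next is only defined on Active \ {T}, hence ai <> T for i < m). *)
Fixpoint is_path (A P : Type) (aT : A) (S : State A P) (l : list A) : Prop :=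
  match l with
  | [] => False
  | [_] => False
  | a :: ((b :: rest) as tl) =>
      Active S a /\ a <> aT /\ Next S a = b /\
      (match rest with [] => Active S b | _ => is_path aT S tl end)
  end.

Definition on_main (A P : Type) (aH aT : A) (S : State A P) (a : A) : Prop :=
  exists l : list A, is_path aT S l /\ hd_error l = Some aH /\
                     last l aH = aT /\ In a l.

Definition removed (A P : Type) (aH aT : A) (S : State A P) (a : A) : Prop :=
  Active S a /\ ~ on_main aH aT S a.

Definition same_shared (A P : Type) (aT : A) (S T : State A P) : Prop :=
  (forall a, Active T a <-> Active S a) /\
  (forall a, Active S a -> a <> aT -> Next T a = Next S a) /\
  (forall a, Active S a -> Val T a = Val S a).

Definition others_same (A P : Type) (p : P) (S T : State A P) : Prop :=
  forall q, q <> p ->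
    PC T q = PC S q /\ xv T q = xv S q /\ curr T q = curr S q /\
    status T q = status S q.

Definition keeps_x_curr_status (A P : Type) (p : P) (S T : State A P) : Prop :=
  xv T p = xv S p /\ curr T p = curr S p /\ status T p = status S p.

Definition only_PC_changes (A P : Type) (p : P) (S T : State A P) : Prop :=
  others_same p S T /\ keeps_x_curr_status p S T.

(* A step (S,e,T) of process p.  The step status chi(e) and address adr(e)
   are outputs of the step and do not constrain the transition. *)
Inductive step (A P : Type) (aH aT : A) (p : P) (S T : State A P) : Prop :=
  | st_invoke :
      PC S p = PC0 ->
      (PC T p = PC1 \/ PC T p = PC2 \/ PC T p = PC3_1) ->
      same_shared aT S T -> others_same p S T ->
      curr T p = curr S p -> status T p = status S p ->
      step aH aT p S T
  | st_fail :
      (PC S p = PC1 \/ PC S p = PC2) -> PC T p = PC0 ->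
      same_shared aT S T -> only_PC_changes p S T ->
      step aH aT p S T
  | st_add_found (pf : A) :
      PC S p = PC1 -> PC T p = PC0 ->
      on_main aH aT S pf -> pf <> aT ->
      num_lt (Val S pf) (Fin (xv S p)) ->
      num_le (Fin (xv S p)) (Val S (Next S pf)) ->
      Val S (Next S pf) = Fin (xv S p) ->
      same_shared aT S T -> only_PC_changes p S T ->
      step aH aT p S T
  | st_add_new (pf a : A) :
      PC S p = PC1 -> PC T p = PC0 ->
      on_main aH aT S pf -> pf <> aT ->
      num_lt (Val S pf) (Fin (xv S p)) ->
      num_le (Fin (xv S p)) (Val S (Next S pf)) ->
      Val S (Next S pf) <> Fin (xv S p) ->
      ~ Active S a ->
      (forall b, Active T b <-> (Active S b \/ b = a)) ->
      Val T a = Fin (xv S p) ->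
      (forall b, Active S b -> Val T b = Val S b) ->
      Next T pf = a ->
      Next T a = Next S pf ->
      (forall b, Active S b -> b <> aT -> b <> pf -> Next T b = Next S b) ->
      only_PC_changes p S T ->
      step aH aT p S T
  | st_rm_found (cu pred : A) :
      PC S p = PC2 -> PC T p = PC0 ->
      on_main aH aT S cu -> Val S cu = Fin (xv S p) ->
      on_main aH aT S pred -> pred <> aT -> Next S pred = cu ->
      (forall b, Active T b <-> Active S b) ->
      (forall b, Active S b -> Val T b = Val S b) ->
      Next T pred = Next S cu ->
      (forall b, Active S b -> b <> aT -> b <> pred -> Next T b = Next S b) ->
      only_PC_changes p S T ->
      step aH aT p S T
  | st_rm_notfound :
      PC S p = PC2 -> PC T p = PC0 ->
      ~ (exists cu, on_main aH aT S cu /\ Val S cu = Fin (xv S p)) ->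
      same_shared aT S T -> only_PC_changes p S T ->
      step aH aT p S T
  | st_c31 :
      PC S p = PC3_1 -> PC T p = PC3_2 -> curr T p = aH ->
      xv T p = xv S p -> status T p = status S p ->
      same_shared aT S T -> others_same p S T ->
      step aH aT p S T
  | st_c32 :
      PC S p = PC3_2 -> PC T p = PC3_4 ->
      Active S (curr S p) -> curr S p <> aT ->
      curr T p = Next S (curr S p) ->
      xv T p = xv S p -> status T p = status S p ->
      same_shared aT S T -> others_same p S T ->
      step aH aT p S T
  | st_c33 :
      PC S p = PC3_3 -> PC T p = PC3_4 ->
      Active S (curr S p) -> curr S p <> aT ->
      curr T p = Next S (curr S p) ->
      xv T p = xv S p -> status T p = status S p ->
      same_shared aT S T -> others_same p S T ->
      step aH aT p S T
  | st_c34_exit :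
      PC S p = PC3_4 -> Active S (curr S p) ->
      num_le (Fin (xv S p)) (Val S (curr S p)) -> PC T p = PC3_5 ->
      same_shared aT S T -> only_PC_changes p S T ->
      step aH aT p S T
  | st_c34_loop :
      PC S p = PC3_4 -> Active S (curr S p) ->
      ~ num_le (Fin (xv S p)) (Val S (curr S p)) -> PC T p = PC3_3 ->
      same_shared aT S T -> only_PC_changes p S T ->
      step aH aT p S T
  | st_c35 :
      PC S p = PC3_5 -> Active S (curr S p) -> PC T p = PC0 ->
      (Val S (curr S p) = Fin (xv S p) -> status T p = St1) ->
      (Val S (curr S p) <> Fin (xv S p) -> status T p = St0) ->
      xv T p = xv S p -> curr T p = curr S p ->
      same_shared aT S T -> others_same p S T ->
      step aH aT p S T.

Definition countably_infinite (A : Type) : Prop :=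
  exists f : nat -> A, (forall m n, f m = f n -> m = n) /\ (forall a, exists n, f n = a).

(* Main.v *)
Require Import Defs.
From Stdlib Require Import List Classical Lia.
Import ListNotations.
Set Implicit Arguments.

Definition path_from (A P : Type) (aT : A) (S : State A P) (y : A) (l : list A) : Prop :=
  match l with [] => Active S y | _ => is_path aT S (y :: l) end.

Lemma pf_cons (A P : Type) (aT : A) (S : State A P) x y l :
  path_from aT S x (y :: l) <->
  Active S x /\ x <> aT /\ Next S x = y /\ path_from aT S y l.
Proof. destruct l; simpl; tauto. Qed.

Ltac pc := apply pf_cons; refine (conj _ (conj _ (conj _ _))).

Lemma last_nd (A : Type) (x : A) l d d' : last (x :: l) d = last (x :: l) d'.
Proof.
  induction l as [|y l IH] in x |- *; [reflexivity|].
  change (last (y :: l) d = last (y :: l) d'). apply IH.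
Qed.

Lemma last_cc (A : Type) (x y : A) l d : last (x :: y :: l) d = last (y :: l) y.
Proof. change (last (y :: l) d = last (y :: l) y). apply last_nd. Qed.

Lemma path_active (A P : Type) (aT : A) (S : State A P) l x :
  path_from aT S x l -> forall y, In y (x :: l) -> Active S y.
Proof.
  induction l as [|z l IH] in x |- *.
  - simpl. intros H y [<-|[]]; auto.
  - intros H. apply pf_cons in H. destruct H as (H1 & _ & _ & H4).
    intros y [<-|Hy]; auto. apply (IH z H4 y Hy).
Qed.

Lemma path_same (A P : Type) (aT : A) (S T : State A P) :
  same_shared aT S T -> forall l x, path_from aT T x l -> path_from aT S x l.
Proof.
  intros [HA [HN _]] l. induction l as [|y l IH]; intros x H.
  - simpl in *. apply HA; auto.
  - apply pf_cons in H. apply pf_cons. destruct H as (H1 & H2 & H3 & H4).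
    apply HA in H1. rewrite <- HN by auto. auto.
Qed.

Lemma path_rm (A P : Type) (aT : A) (S T : State A P) cu pred :
  Active S cu -> cu <> aT -> Next S pred = cu ->
  (forall b, Active T b <-> Active S b) -> Next T pred = Next S cu ->
  (forall b, Active S b -> b <> aT -> b <> pred -> Next T b = Next S b) ->
  forall l x, path_from aT T x l -> exists l', path_from aT S x l' /\
     last (x :: l') x = last (x :: l) x /\ (forall y, In y (x :: l) -> In y (x :: l')).
Proof.
  intros Hcu HcuT Hpc HA HNp HN l. induction l as [|y l IH]; intros x H.
  - exists []. simpl in *. split; [apply HA; auto| split; auto].
  - apply pf_cons in H. destruct H as (H1 & H2 & H3 & H4). apply HA in H1.
    destruct (IH y H4) as (l'' & G1 & G2 & G3).
    destruct (classic (x = pred)) as [Hx|Hx].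
    + subst x. exists (cu :: y :: l''). split; [|split].
      * pc; auto. pc; auto. congruence.
      * rewrite !last_cc. auto.
      * intros z [<-|Hz]; [left; auto|]. right; right. auto.
    + exists (y :: l''). split; [|split].
      * pc; auto. rewrite <- HN; auto.
      * rewrite !last_cc. auto.
      * intros z [<-|Hz]; [left; auto|]. right. auto.
Qed.

Lemma path_add (A P : Type) (aH aT : A) (S T : State A P) pf a' :
  normal aH aT S -> Active S pf -> pf <> aT -> ~ Active S a' ->
  (forall b, Active T b <-> (Active S b \/ b = a')) ->
  Next T pf = a' -> Next T a' = Next S pf ->
  (forall b, Active S b -> b <> aT -> b <> pf -> Next T b = Next S b) ->
  forall n l x, length l <= n -> path_from aT T x l -> x <> a' -> last (x :: l) x <> a' ->
  exists l', path_from aT S x l' /\ last (x :: l') x = last (x :: l) x /\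
    (forall y, In y (x :: l) -> Active S y -> In y (x :: l')).
Proof.
  intros Hn Hpf HpfT Ha' HA HNp HNa HN.
  destruct Hn as (_ & _ & _ & _ & _ & _ & Hnx).
  induction n as [|n IH]; intros l x Hlen H Hx Hl.
  - destruct l; [|simpl in Hlen; lia]. exists []. simpl in *.
    split; [|split; auto]. apply HA in H. tauto.
  - destruct l as [|y r].
    + exists []. simpl in *. split; [|split; auto]. apply HA in H. tauto.
    + apply pf_cons in H. destruct H as (H1 & H2 & H3 & H4).
      assert (H1' : Active S x) by (apply HA in H1; tauto).
      destruct (classic (y = a')) as [Hy|Hy].
      * rewrite Hy in *; clear Hy.
        assert (Hxp : x = pf).
        { destruct (classic (x = pf)) as [e|e]; auto. exfalso.
          rewrite HN in H3 by auto. apply Ha'. rewrite <- H3. apply Hnx; auto. }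
        subst x.
        destruct r as [|z r']. { exfalso. apply Hl. reflexivity. }
        apply pf_cons in H4. destruct H4 as (_ & _ & H5 & H6).
        assert (Hz : z = Next S pf) by congruence.
        assert (HzA : Active S z) by (rewrite Hz; apply Hnx; auto).
        assert (Hza : z <> a') by (intro e; rewrite e in HzA; tauto).
        destruct (IH r' z) as (l'' & G1 & G2 & G3).
        { simpl in Hlen. lia. }
        { exact H6. }
        { exact Hza. }
        { rewrite last_cc, last_cc in Hl. exact Hl. }
        exists (z :: l''). split; [|split].
        -- pc; auto.
        -- rewrite last_cc, G2, last_cc, last_cc. reflexivity.
        -- intros w [<-|[<-|Hw]] Hwa; [left; auto| tauto |]. right. auto.
      * assert (Hxp : x <> pf) by (intro e; subst; congruence).
        destruct (IH r y) as (l'' & G1 & G2 & G3).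
        { simpl in Hlen. lia. }
        { exact H4. }
        { exact Hy. }
        { rewrite last_cc in Hl. exact Hl. }
        exists (y :: l''). split; [|split].
        -- pc; auto. rewrite <- HN; auto.
        -- rewrite !last_cc. auto.
        -- intros w [<-|Hw] Hwa; [left; auto|]. right. auto.
Qed.

Lemma on_main_path (A P : Type) (aH aT : A) (S : State A P) a :
  on_main aH aT S a -> exists l, path_from aT S aH l /\ last (aH :: l) aH = aT /\ In a (aH :: l).
Proof.
  intros (l & H1 & H2 & H3 & H4). destruct l as [|x l]; [discriminate|].
  injection H2 as ->. destruct l as [|y l]; [destruct H1|].
  exists (y :: l). split; auto.
Qed.

Lemma path_on_main (A P : Type) (aH aT : A) (S : State A P) a l :
  aH <> aT -> path_from aT S aH l -> last (aH :: l) aH = aT -> In a (aH :: l) ->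
  on_main aH aT S a.
Proof.
  intros HHT H1 H2 H3. destruct l as [|y l]; [simpl in H2; congruence|].
  exists (aH :: y :: l). split; [exact H1|]. split; auto.
Qed.

Theorem lemma4p7 (A P : Type) (aH aT : A) (HA : countably_infinite A)
  (HHT : aH <> aT) (S T : State A P) (p : P) (a : A) :
  normal aH aT S -> step aH aT p S T ->
  removed aH aT S a -> removed aH aT T a.
Proof.
  intros Hn Hst [HaS HnS].
  pose proof Hn as (Hfin & HHa & HTa & HVH & HVT & HVn & Hnx).
  destruct Hst;
  try (match goal with
       | Hs : same_shared _ _ _ |- _ =>
         split; [apply (proj1 Hs); auto|];
         intros Hm; apply HnS;
         destruct (on_main_path Hm) as (l & G1 & G2 & G3);
         exact (path_on_main S HHT (path_same Hs _ _ G1) G2 G3)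
       end).
  -
    assert (Hpf : Active S pf).
    { destruct H1 as (l & L1 & L2 & L3 & L4). destruct l as [|x l]; [discriminate|].
      injection L2 as ->. destruct l as [|y l]; [destruct L1|].
      eapply path_active; [exact (L1 : path_from aT S aH (y :: l)) | exact L4]. }
    split; [apply H7; auto|].
    intros Hm; apply HnS.
    destruct (on_main_path Hm) as (l & G1 & G2 & G3).
    destruct (path_add T Hn Hpf H2 H6 H7 H10 H11 H12 l (le_n (length l)) G1)
      as (l' & K1 & K2 & K3).
    + intro e; rewrite <- e in H6; tauto.
    + rewrite G2. intro e; rewrite <- e in H6; tauto.
    + apply (path_on_main S HHT K1); [congruence|]. apply K3; auto.
  -
    assert (Hcu : Active S cu).
    { destruct H1 as (l & L1 & L2 & L3 & L4). destruct l as [|x l]; [discriminate|].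
      injection L2 as ->. destruct l as [|y l]; [destruct L1|].
      eapply path_active; [exact (L1 : path_from aT S aH (y :: l)) | exact L4]. }
    assert (HcuT : cu <> aT) by (intro e; subst; congruence).
    split; [apply H6; auto|].
    intros Hm; apply HnS.
    destruct (on_main_path Hm) as (l & G1 & G2 & G3).
    destruct (path_rm S T Hcu HcuT H5 H6 H8 H9 l aH G1) as (l' & K1 & K2 & K3).
    apply (path_on_main S HHT K1); [congruence|]. apply K3; auto.
Qed.
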